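(* Let $(A,\mathfrak{m})$ be a local ring and let $A\subset B$ be an integral extension of rings. Let $R(B)$ denote the Jacobson radical of $B$, and set $A' = A + R(B)\subset B$ and $\mathfrak{m}' = R(B)$. For each maximal ideal $\mathfrak{n}_i$ of $B$ let $\omega_i\colon A/\mathfrak{m}\to B/\mathfrak{n}_i$ be the canonical homomorphism. Then: (1) $(A',\mathfrak{m}')$ is a local ring and the canonical homomorphism $A/\mathfrak{m}\to A'/\mathfrak{m}'$ is an isomorphism; (2) $A'$ is the largest intermediate local ring with this property: if $C$ is a ring with $A\subset C\subset B$ which is local with maximal ideal $\mathfrak{n}$ and $A/\mathfrak{m}\cong C/\mathfrak{n}$ (via the canonical map), then $C\subset A'$; (3) an element $b\in B$ lies in $A'$ if and only if (a) for every maximal ideal $\mathfrak{n}_i$ of $B$, the image $b(x_i)$ of $b$ in $B/\mathfrak{n}_i$ lies in $\omega_i(A/\mathfrak{m})$, and (b) $\omega_i^{-1}(b(x_i)) = \omega_j^{-1}(b(x_j))$ for all $i,j$.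
   Context: All rings are commutative with identity. For a maximal ideal $\mathfrak{n}_i$ of $B$ corresponding to a closed point $x_i\in\mathrm{Spec}(B)$, $b(x_i)$ denotes the image of $b$ in the residue field $B/\mathfrak{n}_i$. *)

(* Defs.v *)
(* Subrings / ideals are represented as Prop-valued
   predicates on the ambient commutative ring B. *)
From mathcomp Require Import all_boot all_order all_algebra.
Set Implicit Arguments. Unset Strict Implicit. Unset Printing Implicit Defensive.
Import GRing.Theory.
Local Open Scope ring_scope.

Section Defs.
Variable B : comNzRingType.

Definition is_subring (S : B -> Prop) : Prop :=
  [/\ S 1, (forall x y, S x -> S y -> S (x - y)) &
      (forall x y, S x -> S y -> S (x * y))].

Definition is_ideal (S I : B -> Prop) : Prop :=
  [/\ (forall x, I x -> S x), I 0,
      (forall x y, I x -> I y -> I (x + y)) &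
      (forall s x, S s -> I x -> I (s * x))].

Definition is_maximal_ideal (S I : B -> Prop) : Prop :=
  [/\ is_ideal S I, ~ I 1 &
      forall J, is_ideal S J -> (forall x, I x -> J x) ->
        J 1 \/ (forall x, J x -> I x)].

Definition is_local (S m : B -> Prop) : Prop :=
  [/\ is_subring S, is_maximal_ideal S m &
      forall n, is_maximal_ideal S n -> forall x, n x <-> m x].

Definition maxB (n : B -> Prop) : Prop := is_maximal_ideal (fun _ => True) n.

Definition jacobson_radical : B -> Prop := fun b => forall n, maxB n -> n b.

Definition sum_pred (S I : B -> Prop) : B -> Prop :=
  fun b => exists a r, [/\ S a, I r & b = a + r].

Definition integral_over (A : B -> Prop) : Prop :=
  forall b : B, exists p : {poly B},
    [/\ p \is monic, (forall i, A p`_i) & root p b].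

(* For local subrings (A,m) ⊆ (C,n) the canonical map A/m -> C/n,
   a mod m |-> a mod n, is a well-defined isomorphism:
   well-defined (m ⊆ n), injective (A ∩ n ⊆ m), surjective
   (every c ∈ C is congruent mod n to some a ∈ A). *)
Definition canonical_residue_iso (A m C n : B -> Prop) : Prop :=
  [/\ (forall a, A a -> m a -> n a),
      (forall a, A a -> n a -> m a) &
      (forall c, C c -> exists a, A a /\ n (c - a))].
End Defs.

(* Main.v *)
Require Import Defs.
From mathcomp Require Import all_boot all_order all_algebra.
From mathcomp Require Import boolp classical_sets ring.
Import GRing.Theory.
Set Implicit Arguments. Unset Strict Implicit.
Local Open Scope ring_scope.

Section Aux.
Variable B : comNzRingType.
Implicit Types S I M N mS : B -> Prop.

Lemma sr0 S : is_subring S -> S 0.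
Proof. by case=> h1 hB _; rewrite -(subrr 1); apply: hB. Qed.

Lemma srN S x : is_subring S -> S x -> S (- x).
Proof. move=> hS hx; have h0 := sr0 hS; case: hS => _ hB _; rewrite -sub0r; exact: hB. Qed.

Lemma srD S x y : is_subring S -> S x -> S y -> S (x + y).
Proof.
move=> hS hx hy; have hy' := srN hS hy; case: hS => _ hB _.
by rewrite -(opprK y); apply: hB.
Qed.

Lemma srB S x y : is_subring S -> S x -> S y -> S (x - y).
Proof. by case=> _ hB _; apply: hB. Qed.

Lemma srM S x y : is_subring S -> S x -> S y -> S (x * y).
Proof. by case=> _ _ hM; apply: hM. Qed.

Lemma sr1 S : is_subring S -> S 1.
Proof. by case. Qed.

Lemma srX S x n : is_subring S -> S x -> S (x ^+ n).
Proof.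
move=> hS hx; elim: n => [|n IH]; first by rewrite expr0; exact: sr1.
by rewrite exprS; apply: srM.
Qed.

Lemma idS S I x : is_ideal S I -> I x -> S x.
Proof. by case=> h _ _ _; apply: h. Qed.

Lemma id0 S I : is_ideal S I -> I 0.
Proof. by case. Qed.

Lemma idD S I x y : is_ideal S I -> I x -> I y -> I (x + y).
Proof. by case=> _ _ h _; apply: h. Qed.

Lemma idM S I s x : is_ideal S I -> S s -> I x -> I (s * x).
Proof. by case=> _ _ _ h; apply: h. Qed.

Lemma idN S I x : is_subring S -> is_ideal S I -> I x -> I (- x).
Proof.
move=> hS hI hx; rewrite -mulN1r; apply: (idM hI) => //.
by apply: srN => //; apply: sr1.
Qed.

Lemma idB S I x y : is_subring S -> is_ideal S I -> I x -> I y -> I (x - y).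
Proof. by move=> hS hI hx hy; apply: (idD hI) => //; apply: (idN hS). Qed.

Lemma id_sum S I n (F : 'I_n -> B) : is_ideal S I -> (forall i, I (F i)) ->
  I (\sum_(i < n) F i).
Proof.
move=> hI hF; apply: (big_ind (fun x => I x)) => //; first exact: (id0 hI).
by move=> x y; apply: (idD hI).
Qed.

Lemma sr_sum S n (F : 'I_n -> B) : is_subring S -> (forall i, S (F i)) ->
  S (\sum_(i < n) F i).
Proof.
move=> hS hF; apply: (big_ind (fun x => S x)) => //; first exact: (sr0 hS).
by move=> x y; apply: srD.
Qed.

Lemma zorn_ideal S I : is_subring S -> is_ideal S I -> ~ I 1 ->
  exists M, is_maximal_ideal S M /\ (forall x, I x -> M x).
Proof.
move=> hS hI hI1.
pose P := fun X : set B => X = set0 \/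
   [/\ is_ideal S X, (forall x, I x -> X x) & ~ X 1].
have PX : forall X x, P X -> X x ->
   [/\ is_ideal S X, (forall x, I x -> X x) & ~ X 1].
  by move=> X x [-> []|h].
have [M [PM Mmax]] : exists A, P A /\ forall B0, proper A B0 -> ~ P B0.
  apply: Zorn_bigcup; move=> F FP Ftot.
  case: (pselect (exists X, F X /\ exists x, X x)) => [[X0 [FX0 [x0 X0x0]]]|hn].
    right; have [hX0 IX0 _] := PX _ _ (FP _ FX0) X0x0.
    split.
    - split.
      + by move=> x [X FX Xx]; have [hX _ _] := PX _ _ (FP _ FX) Xx; exact: (idS hX).
      + by exists X0 => //; exact: (id0 hX0).
      + move=> x y [X1 FX1 X1x] [X2 FX2 X2y].
        case: (Ftot _ _ FX1 FX2) => [h12|h21].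
          have [hX _ _] := PX _ _ (FP _ FX2) X2y.
          by exists X2 => //; apply: (idD hX) => //; apply: h12.
        have [hX _ _] := PX _ _ (FP _ FX1) X1x.
        by exists X1 => //; apply: (idD hX) => //; apply: h21.
      + move=> s x Ss [X FX Xx]; have [hX _ _] := PX _ _ (FP _ FX) Xx.
        by exists X => //; apply: (idM hX).
    - by move=> x Ix; exists X0 => //; apply: IX0.
    - by move=> [X FX X1]; have [_ _ hX1] := PX _ _ (FP _ FX) X1.
  left; apply/predeqP => x; split => // -[X FX Xx].
  by apply: hn; exists X; split => //; exists x.
have hM : [/\ is_ideal S M, (forall x, I x -> M x) & ~ M 1].
  case: PM => [M0|//]; exfalso; apply: (Mmax I); last by right.
  split; first by rewrite M0.
  by move=> h; have := h 0 (id0 hI); rewrite M0.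
case: hM => hMi IM M1; exists M; split => //; split => // K hK MK.
case: (pselect (K 1)) => [|K1]; first by left.
right; case: (pselect (forall x, K x -> M x)) => [//|hn].
exfalso; apply: (Mmax K).
  by split.
by right; split => // x /IM /MK.
Qed.


Lemma subrT : is_subring (fun _ : B => True).
Proof. by []. Qed.

Lemma maxB_ideal N : maxB N -> is_ideal (fun _ : B => True) N.
Proof. by case. Qed.

Lemma maxB_1 N : maxB N -> ~ N 1.
Proof. by case. Qed.

Lemma unit_local S mS x : is_local S mS -> S x -> ~ mS x ->
  exists y, S y /\ x * y = 1.
Proof.
case=> hS hm hall hx hnx.
pose I := fun z => exists s, S s /\ z = x * s.
have hI : is_ideal S I.
  split.
  - by move=> z [s [Ss ->]]; exact: srM.
  - by exists 0; split; [exact: sr0 | rewrite mulr0].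
  - move=> z w [s [Ss ->]] [t [St ->]]; exists (s + t).
    by split; [exact: srD | rewrite mulrDr].
  - move=> u z Su [s [Ss ->]]; exists (u * s).
    by split; [exact: srM | rewrite mulrCA].
case: (pselect (I 1)) => [[y [Sy h]]|nI1]; first by exists y.
have [M [hM IM]] := zorn_ideal hS hI nI1.
exfalso; apply: hnx; apply/(hall M hM); apply: IM; exists 1.
by split; [exact: sr1 | rewrite mulr1].
Qed.

Lemma local_proper S mS I : is_local S mS -> is_ideal S I -> ~ I 1 ->
  forall x, I x -> mS x.
Proof.
move=> hl hI hI1 x Ix; have hl' := hl; case: hl' => hS _ hall.
have [M [hM IM]] := zorn_ideal hS hI hI1.
by apply/(hall M hM); apply: IM.
Qed.

Lemma max_exists : exists N, maxB N.
Proof.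
pose I := fun x : B => x = 0.
have hI : is_ideal (fun _ : B => True) I.
  split => //.
  - by move=> x y -> ->; rewrite addr0.
  - by move=> s x _ ->; rewrite mulr0.
have hI1 : ~ I 1 by rewrite /I => h; move: (oner_neq0 B); rewrite h eqxx.
by have [M [hM _]] := zorn_ideal subrT hI hI1; exists M.
Qed.

Lemma J_unit (r : B) : jacobson_radical r -> exists v, (1 + r) * v = 1.
Proof.
move=> Jr.
pose I := fun z => exists s, z = (1 + r) * s.
have hI : is_ideal (fun _ : B => True) I.
  split => //.
  - by exists 0; rewrite mulr0.
  - by move=> z w [s ->] [t ->]; exists (s + t); rewrite mulrDr.
  - by move=> u z _ [s ->]; exists (u * s); rewrite mulrCA.
case: (pselect (I 1)) => [[y h]|nI1]; first by exists y.
have [M [hM IM]] := zorn_ideal subrT hI nI1.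
exfalso; apply: (maxB_1 hM).
have M1r : M (1 + r) by apply: IM; exists 1; rewrite mulr1.
have Mr : M r by apply: Jr.
have := idB subrT (maxB_ideal hM) M1r Mr.
by rewrite addrK.
Qed.

Lemma pow_cong N (x : B) i : maxB N -> N (x - 1) -> N (1 - x ^+ i).
Proof.
move=> hN hx; have hI := maxB_ideal hN.
elim: i => [|i IH]; first by rewrite expr0 subrr; exact: (id0 hI).
have -> : 1 - x ^+ i.+1 = (1 - x ^+ i) - x ^+ i * (x - 1).
  by rewrite mulrBr mulr1 -exprSr opprB addrA subrK.
by apply: (idB subrT hI) => //; apply: (idM hI).
Qed.

Lemma contract S mS N (a : B) : is_local S mS -> integral_over S -> maxB N -> S a ->
  (N a <-> mS a).
Proof.
move=> hl hint hN Sa; have hl' := hl; case: hl' => hS hmax hall.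
have hm : is_ideal S mS by case: hmax.
have hI := maxB_ideal hN.
split.
  move=> Na.
  have hI' : is_ideal S (fun x => S x /\ N x).
    split.
    + by move=> x [].
    + by split; [exact: sr0 | exact: (id0 hI)].
    + by move=> x y [Sx Nx] [Sy Ny]; split; [exact: srD | exact: (idD hI)].
    + by move=> s x Ss [Sx Nx]; split; [exact: srM | exact: (idM hI)].
  apply: (local_proper hl hI') => //.
  by move=> [_ /(maxB_1 hN)].
move=> ma; case: (pselect (N a)) => // nNa; exfalso.
pose K := fun z => exists n y, N n /\ z = n + a * y.
have hK : is_ideal (fun _ : B => True) K.
  split => //.
  - by exists 0, 0; split; [exact: (id0 hI) | rewrite mulr0 addr0].
  - move=> x y [n1 [y1 [N1 ->]]] [n2 [y2 [N2 ->]]].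
    exists (n1 + n2), (y1 + y2); split; first exact: (idD hI).
    by rewrite mulrDr addrACA.
  - move=> s x _ [n1 [y1 [N1 ->]]]; exists (s * n1), (s * y1).
    by split; [exact: (idM hI) | rewrite mulrDr mulrCA].
have NK : forall x, N x -> K x by move=> x Nx; exists x, 0; rewrite mulr0 addr0.
case: (hN) => _ _ /(_ K hK NK) [[n [y [Nn h1]]]|KN]; last first.
  apply: nNa; apply: KN; exists 0, 1.
  by split; [exact: (id0 hI) | rewrite mulr1 add0r].
have Nay : N (a * y - 1).
  have -> : a * y - 1 = - n by rewrite h1 opprD addrCA subrr addr0.
  exact: (idN subrT hI).
have [p [pm pS pr]] := hint y.
set d := (size p).-1.
have hsz : size p = d.+1 by rewrite /d prednK // size_poly_gt0 monic_neq0.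
have pd : p`_d = 1 by exact: (monicP pm).
pose t := \sum_(i < d.+1) p`_i * a ^+ (d - i).
have Nt : N t.
  have e : a ^+ d * p.[y] = \sum_(i < d.+1) p`_i * a ^+ (d - i) * (a * y) ^+ i.
    rewrite horner_coef hsz mulr_sumr; apply: eq_bigr => i _.
    have -> : a ^+ d = a ^+ (d - i) * a ^+ i by rewrite -exprD subnK // -ltnS.
    by rewrite exprMn; ring.
  have e2 : t = t - a ^+ d * p.[y] by rewrite (rootP pr) mulr0 subr0.
  rewrite e2 e /t -sumrB; apply: (id_sum hI) => i.
  rewrite -[X in X - _]mulr1 -mulrBr; apply: (idM hI) => //.
  exact: pow_cong.
pose s' := \sum_(i < d) p`_i * a ^+ (d - i).
have ts : t = s' + 1 by rewrite /t big_ord_recr /= subnn expr0 mulr1 pd.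
have ms : mS s'.
  apply: (id_sum hm) => i; have -> : (d - i = (d - i.+1).+1)%N by rewrite subnSK.
  rewrite exprSr mulrA; apply: (idM hm) => //.
  apply: srM => //; last exact: srX.
have St : S t by rewrite ts; apply: srD => //; [exact: (idS hm) | exact: sr1].
have nmt : ~ mS t.
  move=> mt; case: hmax => _ hm1 _; apply: hm1.
  by have := idB hS hm mt ms; rewrite ts addrAC subrr add0r.
have [u [Su tu]] := unit_local hl St nmt.
apply: (maxB_1 (N := N)) => //; rewrite -tu mulrC; exact: (idM hI).
Qed.

End Aux.

Theorem mainTheorem1 (B : comNzRingType) (A m : B -> Prop)
  (hAloc : is_local A m) (hint : integral_over A) :
  let A' := sum_pred A (jacobson_radical (B:=B)) in
  let m' := jacobson_radical (B:=B) in
  (* (1) *)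
  (is_local A' m' /\ canonical_residue_iso A m A' m') /\
  (* (2) *)
  (forall C n : B -> Prop,
     (forall x, A x -> C x) ->
     is_local C n -> canonical_residue_iso A m C n ->
     forall x, C x -> A' x) /\
  (* (3) *)
  (forall b : B, A' b <->
     ((forall ni, maxB ni -> exists a, A a /\ ni (b - a)) /\
      (forall ni nj ai aj, maxB ni -> maxB nj -> A ai -> A aj ->
         ni (b - ai) -> nj (b - aj) -> m (ai - aj)))).
Proof.
move=> A' m'.
set J := jacobson_radical (B:=B).
have hA : is_subring A by case: hAloc.
have hmax : is_maximal_ideal A m by case: hAloc.
have hm : is_ideal A m by case: hmax.
have m1 : ~ m 1 by case: hmax.
have [N0 hN0] := max_exists B.
have J0 : J 0 by move=> N hN; exact: (id0 (maxB_ideal hN)).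
have JD : forall x y, J x -> J y -> J (x + y).
  by move=> x y Jx Jy N hN; apply: (idD (maxB_ideal hN)); [apply: Jx | apply: Jy].
have JM : forall s x, J x -> J (s * x).
  by move=> s x Jx N hN; apply: (idM (maxB_ideal hN)) => //; apply: Jx.
have JB : forall x y, J x -> J y -> J (x - y).
  by move=> x y Jx Jy N hN; apply: (idB (subrT B) (maxB_ideal hN)); [apply: Jx | apply: Jy].
have J1 : ~ J 1 by move=> h; apply: (maxB_1 hN0); apply: h.
have mJ : forall a, A a -> m a -> J a.
  by move=> a Aa ma N hN; apply/(contract hAloc hint hN Aa).
have Jm : forall a, A a -> J a -> m a.
  by move=> a Aa Ja; apply/(contract hAloc hint hN0 Aa); apply: Ja.
have A'J : forall x, J x -> A' x.
  by move=> x Jx; exists 0, x; split => //; [exact: sr0 | rewrite add0r].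
have AA' : forall x, A x -> A' x.
  by move=> x Ax; exists x, 0; split => //; rewrite addr0.
have hA' : is_subring A'.
  split.
  - exact: AA' (sr1 hA).
  - move=> x y [a1 [r1 [A1 J1' ->]]] [a2 [r2 [A2 J2 ->]]].
    exists (a1 - a2), (r1 - r2); split; [exact: srB | exact: (JB _ _) | ].
    by rewrite opprD addrACA.
  - move=> x y [a1 [r1 [A1 J1' ->]]] [a2 [r2 [A2 J2 ->]]].
    exists (a1 * a2), (a1 * r2 + r1 * a2 + r1 * r2); split.
    + exact: srM.
    + have h1 : J (a1 * r2) by apply: (JM _ _).
      have h2 : J (r1 * a2) by rewrite mulrC; apply: (JM _ _).
      have h3 : J (r1 * r2) by apply: (JM _ _).
      exact: (JD _ _ (JD _ _ h1 h2) h3).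
    + by rewrite mulrDl !mulrDr !addrA.
have hJid : is_ideal A' J.
  split => //; first by move=> s x _ Jx; exact: (JM _ _).
have unitA' : forall x, A' x -> ~ J x -> exists y, A' y /\ x * y = 1.
  move=> x [a [r [Aa Jr ->]]] nJ.
  have nma : ~ m a by move=> ma; apply: nJ; apply: (JD _ _) => //; exact: mJ.
  have [u [Au au]] := unit_local hAloc Aa nma.
  have [v hv] := J_unit (JM u r Jr).
  exists (u * v); split.
    case: hA' => _ _ hM; apply: hM; first exact: AA'.
    have -> : v = 1 - u * r * v by rewrite -hv mulrDl mul1r addrK.
    exists 1, (- (u * r * v)); split => //; first exact: sr1 hA.
    by rewrite -mulN1r; apply: (JM _ _); rewrite mulrAC; apply: (JM _ _).
  by rewrite mulrA mulrDl au (mulrC r u).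
have hJmax : is_maximal_ideal A' J.
  split => // K hK JK.
  case: (pselect (K 1)) => [|K1]; first by left.
  right => x Kx; case: (pselect (J x)) => // nJx; exfalso; apply: K1.
  have [y [A'y xy]] := unitA' x (idS hK Kx) nJx.
  by rewrite -xy mulrC; apply: (idM hK).
have hloc : is_local A' J.
  split => // n hn x.
  have hni : is_ideal A' n by case: hn.
  have n1 : ~ n 1 by case: hn.
  have nJ : forall z, n z -> J z.
    move=> z nz; case: (pselect (J z)) => // nJz; exfalso; apply: n1.
    have [y [A'y zy]] := unitA' z (idS hni nz) nJz.
    by rewrite -zy mulrC; apply: (idM hni).
  split; first exact: nJ.
  by case: hn => _ _ /(_ J hJid nJ) [//|]; apply.
split.
  split => //; split.
  - exact: mJ.
  - exact: Jm.
  - by move=> c [a [r [Aa Jr ->]]]; exists a; split => //; rewrite addrAC subrr add0r.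
split.
  move=> C n AC hC [_ _ hsurj] x Cx.
  have hintC : integral_over C.
    by move=> b; have [p [pm pA pr]] := hint b; exists p; split => // i; apply: AC.
  have [a [Aa nxa]] := hsurj x Cx.
  have hCs : is_subring C by case: hC.
  have Cxa : C (x - a) by apply: srB => //; apply: AC.
  exists a, (x - a); split => //; last by rewrite addrC subrK.
  by move=> N hN; apply/(contract hC hintC hN Cxa).
move=> b; split.
  move=> [a0 [r [Aa0 Jr ->]]]; split.
    by move=> ni hni; exists a0; split => //; rewrite addrAC subrr add0r; apply: Jr.
  move=> ni nj ai aj hni hnj Aai Aaj nib njb.
  have e : forall (N : B -> Prop) c, maxB N -> A c -> N (a0 + r - c) -> m (a0 - c).
    move=> N c hN Ac hNc; apply/(contract hAloc hint hN (srB hA Aa0 Ac)).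
    have -> : a0 - c = (a0 + r - c) - r by rewrite addrAC addrK.
    by apply: (idB (subrT B) (maxB_ideal hN)) => //; apply: Jr.
  have := idB hA hm (e _ _ hnj Aaj njb) (e _ _ hni Aai nib).
  by rewrite opprB addrC addrA subrK addrC.
move=> [ha hb].
have [a0 [Aa0 hN0b]] := ha N0 hN0.
exists a0, (b - a0); split => //; last by rewrite addrC subrK.
move=> N hN; have [aN [AaN hNb]] := ha N hN.
have maa : m (aN - a0) := hb N N0 aN a0 hN hN0 AaN Aa0 hNb hN0b.
have Naa : N (aN - a0) by apply/(contract hAloc hint hN (srB hA AaN Aa0)).
have -> : b - a0 = (b - aN) + (aN - a0) by rewrite addrA subrK.
exact: (idD (maxB_ideal hN)).
Qed.
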